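(* Let $k$ be a positive integer, let $G$ be a multigraph, and let $A,B$ be nonempty sets of vertices such that $A$ is contained in one equivalence class of $\sim_k$ and $B$ is contained in a different equivalence class of $\sim_k$. Then there is a set $X$ of at most $k-1$ edges of $G$ such that $G-X$ contains no $A$--$B$-path (i.e., $X$ separates $A$ and $B$).
   Context: For vertices $u,v$ of a multigraph $G$, $u\sim_k v$ means that either $u=v$ or there are $k$ pairwise edge-disjoint $u$--$v$-paths in $G$; this is an equivalence relation on $V(G)$. $G-X$ denotes $G$ with the edges of $X$ deleted. *)

(* Defs.v *)
(* A finite multigraph is given by a finite vertex type V,
   a finite edge type E and an endpoint map  ends : E -> V * V
   (parallel edges and loops allowed). *)
From mathcomp Require Import all_boot.
Set Implicit Arguments. Unset Strict Implicit. Unset Printing Implicit Defensive.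

Section Multigraph.
Variables (V E : finType) (ends : E -> V * V).

Definition joins (e : E) (x y : V) : bool :=
  (ends e == (x, y)) || (ends e == (y, x)).

(* A walk from x given as the sequence of steps (edge, next vertex). *)
Fixpoint walk (x : V) (p : seq (E * V)) : bool :=
  if p is (e, y) :: p' then joins e x y && walk y p' else true.

Definition path_verts (x : V) (p : seq (E * V)) : seq V := x :: map snd p.
Definition path_edges (p : seq (E * V)) : seq E := map fst p.

Definition is_path (u v : V) (p : seq (E * V)) : Prop :=
  [/\ walk u p, uniq (path_verts u p) & last u (map snd p) = v].

Definition kequiv (k : nat) (u v : V) : Prop :=
  u = v \/
  exists P : 'I_k -> seq (E * V),
    (forall i, is_path u v (P i)) /\
    (forall i j, i != j ->
       [disjoint [pred e | e \in path_edges (P i)] &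
                 [pred e | e \in path_edges (P j)]]).

(* An A--B path (Diestel): a path x0 ... xn meeting A exactly in x0 and
   B exactly in xn. *)
Definition is_AB_path (A B : {set V}) (x : V) (p : seq (E * V)) : Prop :=
  [/\ walk x p, uniq (path_verts x p),
      [seq y <- path_verts x p | y \in A] = [:: x] &
      [seq y <- path_verts x p | y \in B] = [:: last x (map snd p)]].

Definition has_AB_path_avoiding (A B : {set V}) (X : {set E}) : Prop :=
  exists x p, is_AB_path A B x p /\ all (fun e => e \notin X) (path_edges p).

End Multigraph.

(* Main.v *)
Require Import Defs.
From mathcomp Require Import all_boot.
From mathcomp Require Import all_order all_algebra.
From mathcomp Require Import ring zify.

Set Implicit Arguments. Unset Strict Implicit. Unset Printing Implicit Defensive.

Section Menger.
Import Order.TTheory GRing.Theory Num.Theory.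
Local Open Scope ring_scope.

Variables (V E : finType) (ends : E -> V * V).

Definition flow := {ffun E -> option (V * V)}.
Definition fok (f : flow) := forall e a b, f e = Some (a, b) -> joins ends e a b.
Definition cc (o : option (V * V)) (v : V) : int :=
  if o is Some (a, b) then (a == v)%:R - (b == v)%:R else 0.
Definition exc (f : flow) v : int := \sum_(e : E) cc (f e) v.
Definition setf (f : flow) e o : flow := [ffun e' => if e' == e then o else f e'].

Lemma setfE f e o e' : setf f e o e' = if e' == e then o else f e'.
Proof. by rewrite /setf ffunE. Qed.

Lemma exc_set f e o v : exc (setf f e o) v = exc f v - cc (f e) v + cc o v.
Proof.
rewrite /exc (bigD1 e) //= [in RHS](bigD1 e) //= setfE eqxx.
rewrite (eq_bigr (fun e' => cc (f e') v)); last first.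
  by move=> e' /negPf H; rewrite setfE H.
ring.
Qed.

Lemma joinsC e a b : joins ends e a b = joins ends e b a.
Proof. by rewrite /joins orbC. Qed.

Lemma joins_ends e : joins ends e (ends e).1 (ends e).2.
Proof. by rewrite /joins; case: (ends e) => a b; rewrite eqxx. Qed.

Fixpoint upd (g : E -> option (V * V) -> V -> V -> option (V * V))
   (f : flow) (x : V) (P : seq (E * V)) : flow :=
  if P is (e, y) :: P' then upd g (setf f e (g e (f e) x y)) y P' else f.

Fixpoint allsteps (r : E -> V -> V -> bool) x (P : seq (E * V)) : bool :=
  if P is (e, y) :: P' then r e x y && allsteps r y P' else true.

Lemma upd_exc g (r : E -> V -> V -> bool) (f : flow) (sg : int) :
  (forall e a b, r e a b -> forall v,
      cc (g e (f e) a b) v - cc (f e) v = sg * ((a == v)%:R - (b == v)%:R)) ->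
  forall (P : seq (E * V)) x (fc : flow), uniq (path_edges P) -> allsteps r x P ->
  (forall e, e \in path_edges P -> fc e = f e) ->
  forall v, exc (upd g fc x P) v =
    exc fc v + sg * ((x == v)%:R - (last x (map snd P) == v)%:R).
Proof.
move=> H; elim=> [|[e y] P IH] x fc /=.
  by move=> _ _ _ v; rewrite subrr mulr0 addr0.
rewrite /path_edges /= => /andP[He Hu] /andP[Hr Ha] Hf v.
rewrite IH //; last first.
  move=> e' He'; rewrite setfE; case: eqP => [Heq|_].
    by subst e'; rewrite He' in He.
  by apply: Hf; rewrite inE He' orbT.
rewrite exc_set Hf ?inE ?eqxx //.
have Hd := H _ _ _ Hr v.
have -> : cc (g e (f e) x y) v = cc (f e) v + sg * ((x == v)%:R - (y == v)%:R).
  by rewrite -Hd addrC subrK.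
ring.
Qed.

Lemma upd_other g P x fc e : e \notin path_edges P -> upd g fc x P e = fc e.
Proof.
elim: P x fc => [|[e' y] P IH] x fc //=.
rewrite /path_edges /= inE negb_or => /andP[He1 He2].
rewrite IH //. by rewrite setfE (negPf He1).
Qed.

Lemma upd_rem P x fc e : e \in path_edges P ->
  upd (fun _ _ _ _ => None) fc x P e = None.
Proof.
elim: P x fc => [|[e' y] P IH] x fc //=.
rewrite /path_edges /= inE.
case: (boolP (e \in [seq i.1 | i <- P])) => [H _| H]; first exact: IH.
rewrite orbF => /eqP Hee; subst e; rewrite upd_other //. by rewrite setfE eqxx.
Qed.

Lemma fok_set f e o : fok f -> (forall a b, o = Some (a, b) -> joins ends e a b) ->
  fok (setf f e o).
Proof.
move=> Hf Ho e' a b; rewrite setfE; case: eqP => [->|_]; first exact: Ho.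
exact: Hf.
Qed.

Lemma upd_fok g P x fc : fok fc ->
  (forall e o a b c d, g e o a b = Some (c, d) -> joins ends e c d) ->
  fok (upd g fc x P).
Proof.
move=> Hf Hg; elim: P x fc Hf => [|[e y] P IH] x fc Hf //=.
apply: IH; apply: fok_set => // a b; exact: Hg.
Qed.

Definition rel_of (r : E -> V -> V -> bool) : rel V := fun a b => [exists e, r e a b].

Fixpoint stepsOf (r : E -> V -> V -> bool) x (q : seq V) : seq (E * V) :=
  if q is y :: q' then
    (if [pick e | r e x y] is Some e then (e, y) :: stepsOf r y q' else stepsOf r y q')
  else [::].

Lemma stepsOf_spec r x q : path (rel_of r) x q ->
  map snd (stepsOf r x q) = q /\ allsteps r x (stepsOf r x q).
Proof.
elim: q x => [|y q IH] x //= /andP[/existsP [e0 He0] Hp].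
case: pickP => [e He|H]; last by rewrite H in He0.
have [H1 H2] := IH _ Hp.
by rewrite /= H1 He H2.
Qed.

Lemma allsteps_edges r x P : allsteps r x P ->
  forall e, e \in path_edges P -> exists a b,
    [/\ r e a b, a \in path_verts x P & b \in path_verts x P].
Proof.
elim: P x => [|[e' y] P IH] x //= /andP[Hr Ha] e.
rewrite /path_edges /= inE => /orP [/eqP ->|He].
  by exists x, y; rewrite /path_verts /= Hr !inE !eqxx ?orbT.
have [a [b [H1 H2 H3]]] := IH _ Ha _ He.
exists a, b; split => //; rewrite /path_verts /= inE.
  by move: H2; rewrite /path_verts /= => ->; rewrite orbT.
by move: H3; rewrite /path_verts /= => ->; rewrite orbT.
Qed.

Lemma allsteps_uniq (r : E -> V -> V -> bool) x (P : seq (E * V)) : (forall e a b, r e a b -> joins ends e a b) ->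
  allsteps r x P -> uniq (path_verts x P) -> uniq (path_edges P).
Proof.
move=> Hr; elim: P x => [|[e y] P IH] x //= /andP[He Ha].
rewrite /path_verts /= => /andP [Hx Hu].
rewrite /path_edges /=; apply/andP; split; last exact: (IH y).
apply/negP => Hin.
have [a [b [H1 H2 H3]]] := allsteps_edges Ha Hin.
have J1 := Hr _ _ _ He; have J2 := Hr _ _ _ H1.
suff : (x == a) || (x == b).
  case/orP => /eqP Hxa; subst; [move: H2|move: H3]; rewrite /path_verts => H;
  by rewrite H in Hx.
move: J1 J2; rewrite /joins.
by case/orP => /eqP ->; case/orP => /eqP [] <- <-; rewrite eqxx ?orbT.
Qed.

Lemma allsteps_walk (r : E -> V -> V -> bool) x (P : seq (E * V)) : (forall e a b, r e a b -> joins ends e a b) ->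
  allsteps r x P -> walk ends x P.
Proof.
move=> Hr; elim: P x => [|[e y] P IH] x //= /andP[He Ha].
by rewrite (Hr _ _ _ He) (IH _ Ha).
Qed.

Lemma sum_eqv (R : {set V}) a : \sum_(v in R) ((a == v)%:R : int) = (a \in R)%:R.
Proof.
case: (boolP (a \in R)) => Ha.
  rewrite (bigD1 a) //= eqxx big1 ?addr0 //.
  by move=> v /andP [_ Hv]; rewrite eq_sym (negPf Hv).
by rewrite big1 // => v Hv; case: eqP => // Hav; subst; rewrite Hv in Ha.
Qed.

Lemma sumR_cc (R : {set V}) o : \sum_(v in R) cc o v =
  if o is Some (a, b) then (a \in R)%:R - (b \in R)%:R else 0.
Proof.
case: o => [[a b]|] /=; first by rewrite sumrB !sum_eqv.
by rewrite big1.
Qed.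

Lemma sumR_exc (R : {set V}) f :
  \sum_(v in R) exc f v = \sum_e \sum_(v in R) cc (f e) v.
Proof. by rewrite /exc exchange_big. Qed.

Definition cut (R : {set V}) := [set e | ((ends e).1 \in R) != ((ends e).2 \in R)].

Lemma sum_ind (D : {set E}) : \sum_e ((e \in D)%:R : int) = #|D|%:R.
Proof.
rewrite (eq_bigr (fun e => if e \in D then 1 else 0)); last by move=> e _; case: (e \in D).
by rewrite -big_mkcond sumr_const.
Qed.


Definition rstep (f : flow) e a b :=
  ((f e == None) && joins ends e a b) || (f e == Some (b, a)).
Definition fstep (f : flow) e a b := f e == Some (a, b).

Lemma res_cut f (R : {set V}) : fok f ->
  (forall e a b, a \in R -> rstep f e a b -> b \in R) ->
  \sum_e \sum_(v in R) cc (f e) v = #|cut R|%:R.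
Proof.
move=> Hf HR; rewrite -sum_ind; apply: eq_bigr => e _; rewrite sumR_cc /cut inE.
case Hfe: (f e) => [[a b]|].
  have J := Hf _ _ _ Hfe.
  have Hba : b \in R -> a \in R.
    by move=> Hb; apply: (HR e b a Hb); rewrite /rstep Hfe eqxx orbT.
  move: J; rewrite /joins => /orP [] /eqP -> /=;
    case Ha: (a \in R); case Hb: (b \in R) => //=;
    try (by have := Hba Hb; rewrite Ha); rewrite ?subrr ?subr0 //.
have H1 : (ends e).1 \in R -> (ends e).2 \in R.
  by move=> H; apply: (HR e _ _ H); rewrite /rstep Hfe joins_ends.
have H2 : (ends e).2 \in R -> (ends e).1 \in R.
  by move=> H; apply: (HR e _ _ H); rewrite /rstep Hfe joinsC joins_ends.
case E1: ((ends e).1 \in R); case E2: ((ends e).2 \in R) => //.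
  by have := H1 E1; rewrite E2.
by have := H2 E2; rewrite E1.
Qed.

Lemma fw_cut f (R : {set V}) :
  (forall e a b, a \in R -> fstep f e a b -> b \in R) ->
  \sum_e \sum_(v in R) cc (f e) v <= 0.
Proof.
move=> HR.
suff : \sum_e \sum_(v in R) cc (f e) v <= \sum_(e : E) (0 : int).
  by rewrite [X in _ <= X]big1.
apply: (@ler_sum int) => e _; rewrite sumR_cc; case Hfe: (f e) => [[a b]|] //.
case Ha: (a \in R).
  have -> : b \in R by apply: (HR e a b); rewrite ?Ha // /fstep Hfe.
  by rewrite subrr.
by case: (b \in R).
Qed.

Definition consv (f : flow) s t := forall v, v != s -> v != t -> exc f v = 0.

Lemma sumR_cons f s t (R : {set V}) : consv f s t -> s \in R -> t \notin R ->
  \sum_(v in R) exc f v = exc f s.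
Proof.
move=> Hc Hs Ht; rewrite (bigD1 s) //= big1 ?addr0 // => v /andP [Hv Hvs].
apply: Hc => //; apply/eqP => Hvt; subst; by rewrite Hv in Ht.
Qed.

Definition Rof (r : E -> V -> V -> bool) s := [set y | connect (rel_of r) s y].

Lemma Rof_closed (r : E -> V -> V -> bool) s e a b :
  a \in Rof r s -> r e a b -> b \in Rof r s.
Proof.
rewrite !inE => Ha Hr; apply: connect_trans Ha (connect1 _).
by apply/existsP; exists e.
Qed.

Lemma Rof_s (r : E -> V -> V -> bool) s : s \in Rof r s.
Proof. by rewrite inE connect0. Qed.

Lemma Rof_path (r : E -> V -> V -> bool) s t : t \in Rof r s ->
  exists q, [/\ path (rel_of r) s q, uniq (s :: q) & last s q = t].
Proof.
rewrite inE => /connectP [p Hp ->]; case: (shortenP Hp) => q Hq Hu _.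
by exists q.
Qed.

Definition gaug e (o : option (V * V)) a b :=
  if o is None then (if joins ends e a b then Some (a, b) else None) else None.

Lemma maxflow s t : s != t -> forall j : nat,
  (exists f, [/\ fok f, consv f s t & exc f s = j%:R]) \/
  (exists R : {set V}, [/\ s \in R, t \notin R & (#|cut R| < j)%N]).
Proof.
move=> Hst; elim=> [|j [[f [Hf Hc Hv]]|[R [H1 H2 H3]]]].
- left; exists [ffun => None]; split.
  + by move=> e a b; rewrite ffunE.
  + by move=> v _ _; rewrite /exc big1 // => e _; rewrite ffunE.
  + by rewrite /exc big1 // => e _; rewrite ffunE.
- set R := Rof (rstep f) s.
  have HR : forall e a b, a \in R -> rstep f e a b -> b \in R.
    by move=> *; apply: Rof_closed; eauto.
  case: (boolP (t \in R)) => Ht.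
  + left. have [q [Hp Hu Hl]] := Rof_path Ht. have [Hm Ha] := stepsOf_spec Hp.
    set P := stepsOf (rstep f) s q.
    have Hrj : forall e a b, rstep f e a b -> joins ends e a b.
      move=> e a b /orP [/andP [_ ->]// | /eqP Hfe]; rewrite joinsC; exact: Hf Hfe.
    have Hue : uniq (path_edges P).
      by apply: (allsteps_uniq Hrj Ha); rewrite /path_verts Hm.
    have Hstep : forall e a b, rstep f e a b -> forall v,
        cc (gaug e (f e) a b) v - cc (f e) v = 1 * ((a == v)%:R - (b == v)%:R).
      move=> e a b /orP [/andP [/eqP -> Hj] | /eqP ->] v /=; last by ring.
      by rewrite Hj /=; ring.
    have Hex := @upd_exc gaug (rstep f) f 1 Hstep P s f Hue Ha (fun _ _ => erefl).
    exists (upd gaug f s P); split.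
    * apply: upd_fok => // e o a b c d; rewrite /gaug; case: o => //.
      by case: ifP => // Hj [<- <-].
    * move=> v Hvs Hvt; rewrite Hex Hc // Hm Hl (eq_sym s) (negPf Hvs) (eq_sym t) (negPf Hvt) /=.
      ring.
    * rewrite Hex Hv Hm Hl eqxx eq_sym (negPf Hst) /=; ring.
  + right; exists R; split => //; first exact: Rof_s.
    have := res_cut Hf HR; rewrite -sumR_exc (sumR_cons Hc) ?Rof_s // Hv => /eqP.
    by rewrite eqr_nat => /eqP ->.
- by right; exists R; split => //; exact: ltnW.
Qed.


Lemma decomp s t : s != t -> forall (j : nat) (f : flow), fok f -> consv f s t ->
  exc f s = j%:R ->
  exists F : nat -> seq (E * V),
   (forall i, (i < j)%N -> is_path ends s t (F i) /\
                           all (fun e => f e != None) (path_edges (F i))) /\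
   (forall i i', (i < j)%N -> (i' < j)%N -> i != i' ->
      [disjoint [pred e | e \in path_edges (F i)] &
                [pred e | e \in path_edges (F i')]]).
Proof.
move=> Hst; elim=> [|j IH] f Hf Hc Hv.
  by exists (fun _ => [::]); split.
set R := Rof (fstep f) s.
have HR : forall e a b, a \in R -> fstep f e a b -> b \in R.
  by move=> *; apply: Rof_closed; eauto.
have Ht : t \in R.
  apply/negPn/negP => Ht.
  have := fw_cut HR; rewrite -sumR_exc (sumR_cons Hc) ?Rof_s // Hv.
  by rewrite leNgt ltr0Sn.
have [q [Hp Hu Hl]] := Rof_path Ht. have [Hm Ha] := stepsOf_spec Hp.
set P := stepsOf (fstep f) s q.
have Hrj : forall e a b, fstep f e a b -> joins ends e a b.
  by move=> e a b /eqP; exact: Hf.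
have Hue : uniq (path_edges P).
  by apply: (allsteps_uniq Hrj Ha); rewrite /path_verts Hm.
have Hstep : forall e a b, fstep f e a b -> forall v,
    cc ((fun _ _ _ _ => None) e (f e) a b) v - cc (f e) v
      = (-1) * ((a == v)%:R - (b == v)%:R).
  by move=> e a b /eqP -> v /=; ring.
have Hex := @upd_exc (fun _ _ _ _ => None) (fstep f) f (-1) Hstep P s f Hue Ha
   (fun _ _ => erefl).
set f' := upd (fun _ _ _ _ => None) f s P.
have Hf' : fok f' by apply: upd_fok.
have Hc' : consv f' s t.
  move=> v Hvs Hvt; rewrite Hex Hc // Hm Hl (eq_sym s) (negPf Hvs) (eq_sym t) (negPf Hvt) /=.
  ring.
have Hv' : exc f' s = j%:R.
  rewrite Hex Hv Hm Hl eqxx eq_sym (negPf Hst) /=; ring.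
have [F [HF1 HF2]] := IH f' Hf' Hc' Hv'.
have Hused : forall e, f' e != None -> e \notin path_edges P /\ f e != None.
  move=> e He; have Hn : e \notin path_edges P.
    by apply/negP => Hin; rewrite /f' upd_rem in He.
  by split => //; rewrite /f' upd_other in He.
have HP : is_path ends s t P.
  split; [exact: allsteps_walk Hrj Ha | by rewrite /path_verts Hm | by rewrite Hm].
have HPu : all (fun e => f e != None) (path_edges P).
  apply/allP => e He; have [a [b [H1 _ _]]] := allsteps_edges Ha He.
  by move: H1; rewrite /fstep => /eqP ->.
have Pdisj : forall i, (i < j)%N ->
    [disjoint [pred e | e \in path_edges P] & [pred e | e \in path_edges (F i)]].
  move=> i Hi; apply/pred0P => e /=; rewrite !inE; apply/negP => /andP [H1 H2].
  have [_ H3] := HF1 _ Hi; have := allP H3 e H2; case/Hused => Hn _.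
  by rewrite H1 in Hn.
exists (fun n => if n == j then P else F n); split.
  move=> i; rewrite ltnS leq_eqVlt => /orP [/eqP ->|Hi]; first by rewrite eqxx.
  rewrite (ltn_eqF Hi); have [H1 H2] := HF1 _ Hi; split => //.
  by apply/allP => e He; have := allP H2 e He; case/Hused.
move=> i i' Hi0 Hi0'.
move: Hi0; rewrite ltnS leq_eqVlt => /orP [/eqP Hi|Hi];
move: Hi0'; rewrite ltnS leq_eqVlt => /orP [/eqP Hi'|Hi'] Hii'.
- by subst; rewrite eqxx in Hii'.
- by subst; rewrite eqxx (ltn_eqF Hi'); exact: Pdisj.
- by subst; rewrite eqxx (ltn_eqF Hi) disjoint_sym; exact: Pdisj.
- by rewrite (ltn_eqF Hi) (ltn_eqF Hi'); exact: HF2.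
Qed.


Lemma small_cut s t k : s != t -> ~ kequiv ends k s t ->
  exists R : {set V}, [/\ s \in R, t \notin R & (#|cut R| < k)%N].
Proof.
move=> Hst Hk; case: (maxflow Hst k) => [[f [Hf Hc Hv]]|//].
exfalso; apply: Hk; right.
have [F [H1 H2]] := decomp Hst Hf Hc Hv.
exists (fun i : 'I_k => F i); split.
  by move=> i; exact: (H1 _ (ltn_ord i)).1.
by move=> i i' Hii'; apply: H2 => //.
Qed.

Lemma walk_cross (R : {set V}) x p : walk ends x p ->
  (x \in R) != (last x (map snd p) \in R) ->
  exists e, e \in path_edges p /\ e \in cut R.
Proof.
elim: p x => [|[e y] p IH] x /=; first by rewrite eqxx.
move=> /andP [Hj Hw] Hne.
have [Hxy|Hxy] := eqVneq (x \in R) (y \in R).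
  rewrite Hxy in Hne; have [e' [H1 H2]] := IH _ Hw Hne; exists e'; split => //.
  by rewrite /path_edges /= inE; apply/orP; right; exact: H1.
exists e; split; first by rewrite /path_edges /= inE eqxx.
rewrite /cut inE; move: Hj; rewrite /joins => /orP [] /eqP -> //=.
by rewrite eq_sym.
Qed.

Lemma kequiv_cut (R : {set V}) k u v : (u \in R) != (v \in R) ->
  kequiv ends k u v -> (k <= #|cut R|)%N.
Proof.
move=> Huv [Heq|[P [HP Hd]]]; first by subst; rewrite eqxx in Huv.
have Hex : forall i, exists e, e \in cut R /\ e \in path_edges (P i).
  move=> i; have [Hw _ Hl] := HP i.
  have := @walk_cross R u (P i) Hw; rewrite Hl => /(_ Huv) [e [H1 H2]].
  by exists e.
have [g Hg] := fin_all_exists Hex.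
have Hinj : injective g.
  move=> i i' Heq; apply/eqP; apply/negPn/negP => Hne.
  have [_ H1] := Hg i; have [_ H2] := Hg i'; rewrite Heq in H1.
  have := disjointFr (Hd _ _ Hne) (x := g i'); rewrite !inE H1 H2 => /(_ isT).
  done.
have -> : k = #|[set g i | i : 'I_k]| by rewrite card_imset // card_ord.
apply: subset_leq_card; apply/subsetP => e /imsetP [i _ ->]; by case: (Hg i).
Qed.

End Menger.

Theorem lemma9 (V E : finType) (ends : E -> V * V) (k : nat) (A B : {set V}) :
  0 < k ->
  A != set0 -> B != set0 ->
  (exists a0 b0 : V,
     ~ kequiv ends k a0 b0 /\
     (forall a, a \in A -> kequiv ends k a a0) /\
     (forall b, b \in B -> kequiv ends k b b0)) ->
  exists X : {set E}, #|X| <= k - 1 /\ ~ has_AB_path_avoiding ends A B X.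
Proof.
move=> Hk _ _ [a0 [b0 [Hab [HAa HBb]]]].
have Hst : a0 != b0 by apply/eqP => Heq; apply: Hab; left.
have [R [HaR HbR Hcut]] := small_cut Hst Hab.
have HA' : forall a, a \in A -> a \in R.
  move=> a Ha; apply/negPn/negP => Hn.
  have := kequiv_cut (R := R) _ (HAa a Ha); rewrite (negPf Hn) HaR => /(_ isT).
  by rewrite leqNgt Hcut.
have HB' : forall b, b \in B -> b \notin R.
  move=> b Hb; apply/negP => Hn.
  have := kequiv_cut (R := R) _ (HBb b Hb); rewrite Hn (negPf HbR) => /(_ isT).
  by rewrite leqNgt Hcut.
exists (cut ends R); split; first by lia.
move=> [x [p [[Hw Hu HfA HfB] Hall]]].
have HxA : x \in A.
  have : x \in [seq y <- path_verts x p | y \in A] by rewrite HfA inE.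
  by rewrite mem_filter => /andP [].
have HzB : last x (map snd p) \in B.
  have : last x (map snd p) \in [seq y <- path_verts x p | y \in B] by rewrite HfB inE.
  by rewrite mem_filter => /andP [].
have := walk_cross (R := R) Hw; rewrite HA' // (negPf (HB' _ HzB)) => /(_ isT) [e [H1 H2]].
by move/allP: Hall => /(_ e H1); rewrite H2.
Qed.
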